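(* In the setting below with $P=\mathfrak A$, the worst case setting and the absolute error criterion, suppose $\lambda_1<1$. Then the following are equivalent: (a) $\{S_d\}$ is strongly polynomially tractable; (b) $\{S_d\}$ is polynomially tractable; (c) there exists $\tau\in(0,\infty)$ with $\lambda\in\ell_\tau$. The same equivalences hold if $\lambda_1\ge1$ and $\#I_d$ grows linearly with $d$, i.e. there is $c>0$ with $\#I_d\ge c\,d$ for all sufficiently large $d$.
   Context: Setting: $S_1:H_1\to G_1$ is a compact linear operator between real Hilbert spaces ($H_1$ infinite-dimensional separable); $\lambda=(\lambda_m)_{m\in\mathbb N}$, $\lambda_1\ge\lambda_2\ge\dots\ge0$, are the eigenvalues of $S_1^\dagger S_1$. $S_d=S_1^{\otimes d}:H_1^{\otimes d}\to G_1^{\otimes d}$. For each $d$ fix $\emptyset\ne I_d=\{i_1<\dots<i_{a_d}\}\subset\{1,\dots,d\}$ ($I_1=\{1\}$), put $a_d=\#I_d$, $b_d=d-a_d$, and fix one type $P\in\{\mathfrak S,\mathfrak A\}$ for all $d$; the problem $\{S_d\}$ is the family of restrictions of $S_d$ to the $I_d$-symmetric subspace (if $P=\mathfrak S$) or $I_d$-antisymmetric subspace (if $P=\mathfrak A$) of $H_1^{\otimes d}$, i.e. the range of $\frac1{a_d!}\sum_{\pi}(\pm1)U_\pi$, the sum over permutations $\pi$ of $\{1,\dots,d\}$ fixing all points outside $I_d$, $U_\pi(f_1\otimes\cdots\otimes f_d)=f_{\pi(1)}\otimes\cdots\otimes f_{\pi(d)}$, sign $(-1)^{|\pi|}$ used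 for $\mathfrak A$. Let $\nabla_d=\{k\in\mathbb N^d:k_{i_1}\le\dots\le k_{i_{a_d}}\}$ for $P=\mathfrak S$ and with strict inequalities for $P=\mathfrak A$; $\lambda_{d,k}=\prod_{l=1}^d\lambda_{k_l}$; $\psi:\mathbb N\to\nabla_d$ a bijection with $\lambda_{d,\psi(1)}\ge\lambda_{d,\psi(2)}\ge\cdots$. These are exactly the eigenvalues of $S_d^\dagger S_d$ on the subspace, and the information complexity (absolute error) is $n(\epsilon,d)=\#\{k\in\nabla_d:\lambda_{d,k}>\epsilon^2\}$, the initial error $\epsilon^{\rm init}_d=\sqrt{\lambda_{d,\psi(1)}}$ (equal to $\lambda_1^{d/2}$ if $P=\mathfrak S$, and $\sqrt{\lambda_1^{b_d}\lambda_1\lambda_2\cdots\lambda_{a_d}}$ if $P=\mathfrak A$). Polynomially tractable: $\exists C,p>0,q\ge0$ with $n(\epsilon,d)\le C\epsilon^{-p}d^q$ for all $d\in\mathbb N,\epsilon\in(0,1]$; strongly polynomially tractable: this with $q=0$. Standing assumptions: $\lambda_2>0$ and $\epsilon_d^{\rm init}>0$ for all $d$. $\ell_\tau$: sequences with $\|\lambda\|_{\ell_\tau}^\tau=\sum_m\lambda_m^\tau<\infty$. *)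

(* Defs.v *)
From Stdlib Require Import Reals Lra Lia List.
Import ListNotations.
Open Scope R_scope.

(* Eigenvalue sequence lam : nat -> R, used 1-based: lam 1 >= lam 2 >= ... >= 0.
   (lam 0 is irrelevant.)  *)

(* nonnegative, nonincreasing, tending to 0 (compactness of S_1) *)
Definition eigen_seq (lam : nat -> R) : Prop :=
  (forall m, (1 <= m)%nat -> 0 <= lam m) /\
  (forall m, (1 <= m)%nat -> lam (S m) <= lam m) /\
  (forall e, 0 < e -> exists M, forall m, (M <= m)%nat -> lam m < e).

(* Index sets: I d j = true  means  j \in I_d ; required I_d a nonempty subset
   of {1,...,d}, and I_1 = {1}. *)
Definition index_family (I : nat -> nat -> bool) : Prop :=
  (forall d j, I d j = true -> (1 <= j <= d)%nat) /\
  (forall d, (1 <= d)%nat -> exists j, I d j = true) /\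
  I 1%nat 1%nat = true.

Definition card_I (I : nat -> nat -> bool) (d : nat) : nat :=
  length (filter (I d) (seq 1 d)).

(* Multi-indices k in N^d are lists of length d with entries >= 1;
   k_l is  nth (l-1) k 0. *)
(* nabla_d for P = antisymmetric: strictly increasing along I_d. *)
Definition nablaA (I : nat -> nat -> bool) (d : nat) (k : list nat) : Prop :=
  length k = d /\
  (forall m, In m k -> (1 <= m)%nat) /\
  (forall i j, (1 <= i)%nat -> (i < j)%nat -> (j <= d)%nat ->
     I d i = true -> I d j = true ->
     (nth (i - 1) k 0 < nth (j - 1) k 0)%nat).

Definition lam_prod (lam : nat -> R) (k : list nat) : R :=
  fold_right (fun m acc => lam m * acc) 1 k.

(* Standing assumption: initial error eps_d^init = sqrt(max_k lambda_{d,k}) > 0,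
   i.e. some k in nabla_d has lambda_{d,k} > 0. *)
Definition init_error_pos (lam : nat -> R) (I : nat -> nat -> bool) : Prop :=
  forall d, (1 <= d)%nat -> exists k, nablaA I d k /\ 0 < lam_prod lam k.

(* "n(eps,d) <= N" : every finite set (duplicate-free list) of k in nabla_d
   with lambda_{d,k} > eps^2 has at most N elements. *)
Definition n_le (lam : nat -> R) (I : nat -> nat -> bool) (eps : R) (d : nat)
  (N : R) : Prop :=
  forall l : list (list nat), NoDup l ->
    (forall k, In k l -> nablaA I d k /\ lam_prod lam k > eps ^ 2) ->
    INR (length l) <= N.

Definition poly_tractable (lam : nat -> R) (I : nat -> nat -> bool) : Prop :=
  exists C p q, 0 < C /\ 0 < p /\ 0 <= q /\
    forall d eps, (1 <= d)%nat -> 0 < eps <= 1 ->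
      n_le lam I eps d (C * Rpower eps (- p) * Rpower (INR d) q).

Definition strongly_poly_tractable (lam : nat -> R) (I : nat -> nat -> bool) : Prop :=
  exists C p, 0 < C /\ 0 < p /\
    forall d eps, (1 <= d)%nat -> 0 < eps <= 1 ->
      n_le lam I eps d (C * Rpower eps (- p)).

(* x^t for x >= 0, t > 0, with 0^t = 0 (Stdlib's Rpower 0 t is 1). *)
Definition rpow_nn (x t : R) : R :=
  if Rle_dec x 0 then 0 else Rpower x t.

Definition in_ell (lam : nat -> R) (tau : R) : Prop :=
  exists s, infinite_sum (fun m => rpow_nn (lam (S m)) tau) s.

(* Main.v *)
Require Import Defs.
From Stdlib Require Import Reals Lra Lia List.
Import ListNotations.
Open Scope R_scope.

Definition sumL {A} (f : A -> R) (l : list A) : R :=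
  fold_right (fun x acc => f x + acc) 0 l.

Lemma sumL_app {A} (f : A -> R) l1 l2 : sumL f (l1 ++ l2) = sumL f l1 + sumL f l2.
Proof. induction l1; simpl; [lra|]. rewrite IHl1; lra. Qed.

Lemma sumL_nonneg {A} (f : A -> R) l : (forall x, 0 <= f x) -> 0 <= sumL f l.
Proof. intros H; induction l; simpl; [lra|]. specialize (H a); lra. Qed.

Lemma sumL_remove_le (f : list nat -> R) a L : (forall x, 0 <= f x) ->
  sumL f (remove (list_eq_dec Nat.eq_dec) a L) <= sumL f L.
Proof.
  intros Hf; induction L as [|b L IH]; simpl; [lra|].
  destruct (list_eq_dec Nat.eq_dec a b); simpl.
  - specialize (Hf b); lra.
  - lra.
Qed.

Lemma sumL_remove_in (f : list nat -> R) a L : (forall x, 0 <= f x) -> In a L ->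
  f a + sumL f (remove (list_eq_dec Nat.eq_dec) a L) <= sumL f L.
Proof.
  intros Hf; induction L as [|b L IH]; simpl; [tauto|].
  intros Hin. destruct (list_eq_dec Nat.eq_dec a b) as [<-|n]; simpl.
  - pose proof (sumL_remove_le f a L Hf); lra.
  - destruct Hin as [->|Hin]; [congruence|]. specialize (IH Hin); lra.
Qed.

Lemma sumL_sub (f : list nat -> R) l L : (forall x, 0 <= f x) -> NoDup l -> incl l L ->
  sumL f l <= sumL f L.
Proof.
  intros Hf; revert L; induction l as [|a l IH]; intros L Hnd Hinc; simpl.
  - apply sumL_nonneg; auto.
  - inversion Hnd; subst.
    assert (Ha : In a L) by (apply Hinc; simpl; auto).
    assert (Hi : incl l (remove (list_eq_dec Nat.eq_dec) a L)).
    { intros x Hx. apply in_in_remove.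
      - intros ->; contradiction.
      - apply Hinc; simpl; auto. }
    specialize (IH _ H2 Hi). pose proof (sumL_remove_in f a L Hf Ha). lra.
Qed.

Fixpoint box (B d : nat) : list (list nat) :=
  match d with
  | O => [[]]
  | S d => flat_map (fun m => map (cons m) (box B d)) (seq 1 B)
  end.

Lemma box_in B : forall d k, length k = d -> (forall m, In m k -> (1 <= m <= B)%nat) ->
  In k (box B d).
Proof.
  induction d as [|d IH]; intros k Hl Hm; simpl.
  - destruct k; simpl in *; [auto|lia].
  - destruct k as [|m k]; simpl in Hl; [lia|].
    apply in_flat_map. exists m. split.
    + apply in_seq. specialize (Hm m (or_introl eq_refl)). lia.
    + apply in_map. apply IH; [lia|]. intros x Hx; apply Hm; simpl; auto.
Qed.

Lemma sumL_flat_map {A B} (f : B -> R) (g : A -> list B) l :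
  sumL f (flat_map g l) = sumL (fun a => sumL f (g a)) l.
Proof. induction l; simpl; [lra|]. rewrite sumL_app, IHl; lra. Qed.

Lemma sumL_map_cons (mu : nat -> R) m X :
  sumL (lam_prod mu) (map (cons m) X) = mu m * sumL (lam_prod mu) X.
Proof. induction X; simpl; [lra|]. rewrite IHX. unfold lam_prod; simpl. ring. Qed.

Lemma sumL_scal {A} (f : A -> R) c l : sumL (fun x => f x * c) l = sumL f l * c.
Proof. induction l; simpl; [lra|]. rewrite IHl; lra. Qed.

Lemma sum_box mu B d : sumL (lam_prod mu) (box B d) = (sumL mu (seq 1 B)) ^ d.
Proof.
  induction d as [|d IH]; simpl.
  - unfold lam_prod; simpl; lra.
  - rewrite sumL_flat_map.
    transitivity (sumL (fun m => mu m * sumL (lam_prod mu) (box B d)) (seq 1 B)).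
    + clear IH. induction (seq 1 B); simpl. lra. rewrite sumL_map_cons. rewrite IHl. lra.
    + rewrite sumL_scal, IH; lra.
Qed.

Lemma bound_exists (l : list (list nat)) : exists B, forall k, In k l -> forall m, In m k -> (m <= B)%nat.
Proof.
  induction l as [|k l [B HB]].
  - exists O; simpl; tauto.
  - assert (Hk : exists b, forall m, In m k -> (m <= b)%nat).
    { clear. induction k as [|a k [b Hb]]; [exists O; simpl; tauto|].
      exists (Nat.max a b). intros m [->|Hm]; [lia|]. specialize (Hb m Hm); lia. }
    destruct Hk as [b Hb]. exists (Nat.max b B).
    intros k' [<-|Hk'] m Hm; [specialize (Hb m Hm)|specialize (HB k' Hk' m Hm)]; lia.
Qed.

Lemma lam_prod_nonneg mu k : (forall m, 0 <= mu m) -> 0 <= lam_prod mu k.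
Proof. intros H; induction k; unfold lam_prod in *; simpl; [lra|].
  apply Rmult_le_pos; auto. Qed.

Lemma count_bound (mu : nat -> R) (S : R) d (l : list (list nat)) :
  (forall m, 0 <= mu m) -> (forall B, sumL mu (seq 1 B) <= S) -> NoDup l ->
  (forall k, In k l -> length k = d /\ forall m, In m k -> (1 <= m)%nat) ->
  sumL (lam_prod mu) l <= S ^ d.
Proof.
  intros Hmu HS Hnd Hl. destruct (bound_exists l) as [B HB].
  eapply Rle_trans.
  - apply (sumL_sub _ l (box B d)); auto.
    + intros; apply lam_prod_nonneg; auto.
    + intros k Hk. apply box_in; [apply Hl; auto|].
      intros m Hm. split; [apply (Hl k Hk); auto| apply (HB k Hk m Hm)].
  - rewrite sum_box. apply pow_incr. split; [apply sumL_nonneg; auto| apply HS].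
Qed.


Lemma sum_inv_sq n : sum_f_R0 (fun j => / (INR (S j))^2) n <= 2 - 2 / (INR n + 2).
Proof.
  induction n as [|n IH].
  - simpl. lra.
  - rewrite tech5. rewrite !S_INR in *. set (x := INR n) in *.
    assert (Hx : 0 <= x) by apply pos_INR.
    assert (E : 2 / (x + 2) - 2 / (x + 1 + 2) = / ((x+2)*(x+3)/2)) by (field; lra).
    assert (Hle : / (x + 1 + 1) ^ 2 <= / ((x+2)*(x+3)/2)).
    { apply Rinv_le_contravar; nra. }
    lra.
Qed.

Lemma ell_of_bound (t : nat -> R) D : (forall j, 0 <= t j) ->
  (forall j, t j <= D * / (INR (S j))^2) -> exists s, infinite_sum t s.
Proof.
  intros Ht Hb.
  assert (HD : 0 <= D).
  { specialize (Hb O); specialize (Ht O). simpl in Hb.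
    replace (/ ((0+1)*1)) with 1 in Hb by field. lra. }
  assert (Hg : Un_growing (sum_f_R0 t)).
  { intros n. rewrite tech5. specialize (Ht (S n)); lra. }
  assert (Hub : has_ub (sum_f_R0 t)).
  { exists (2 * D). intros y [n ->].
    assert (H1 : sum_f_R0 t n <= D * sum_f_R0 (fun j => / (INR (S j))^2) n).
    { induction n as [|n IH].
      - simpl. apply Hb.
      - rewrite !tech5. specialize (Hb (S n)). rewrite Rmult_plus_distr_l. lra. }
    pose proof (sum_inv_sq n).
    assert (0 < 2 / (INR n + 2)).
    { pose proof (pos_INR n). apply Rdiv_lt_0_compat; lra. }
    nra. }
  destruct (growing_cv _ Hg Hub) as [s Hs]. exists s. exact Hs.
Qed.

Lemma rpow_nn_nonneg x t : 0 <= rpow_nn x t.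
Proof. unfold rpow_nn. destruct (Rle_dec x 0); [lra|]. unfold Rpower. left; apply exp_pos. Qed.

Lemma lam_mono lam : eigen_seq lam -> forall j m, (1 <= j)%nat -> (j <= m)%nat -> lam m <= lam j.
Proof.
  intros [H0 [H1 H2]] j m Hj Hjm. induction Hjm; [lra|].
  specialize (H1 m ltac:(lia)). lra.
Qed.

Lemma finite_max (f : nat -> R) M : exists D, forall m, (m < M)%nat -> f m <= D.
Proof.
  induction M as [|M [D HD]].
  - exists 0; intros; lia.
  - exists (Rmax D (f M)). intros m Hm.
    destruct (Nat.eq_dec m M) as [->|]; [apply Rmax_r|].
    eapply Rle_trans; [apply HD; lia|apply Rmax_l].
Qed.

Lemma pt_ell (lam : nat -> R) (I : nat -> nat -> bool) C p :
  eigen_seq lam -> 0 < C -> 0 < p ->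
  (forall eps, 0 < eps <= 1 -> n_le lam I eps 1 (C * Rpower eps (- p))) ->
  exists tau, 0 < tau /\ in_ell lam tau.
Proof.
  intros Hl HC Hp Hn. exists p; split; [auto|].
  destruct Hl as [Hnn [Hdec Hlim]].
  destruct (Hlim 1 ltac:(lra)) as [M0 HM0].
  set (M1 := Nat.max M0 1).
  set (K := Rpower 2 p * C ^ 2).
  assert (Key : forall m, (M1 <= m)%nat -> rpow_nn (lam m) p <= K * / (INR m)^2).
  { intros m Hm.
    assert (Hm1 : (1 <= m)%nat) by lia.
    assert (Hlm1 : lam m < 1) by (apply HM0; lia).
    assert (HmR : 0 < INR m) by (apply lt_0_INR; lia).
    assert (HK : 0 <= K).
    { unfold K. apply Rmult_le_pos; [left; unfold Rpower; apply exp_pos|].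
      apply pow_le; lra. }
    unfold rpow_nn. destruct (Rle_dec (lam m) 0) as [Hle|Hgt].
    { apply Rmult_le_pos; [auto|]. left; apply Rinv_0_lt_compat, pow_lt; auto. }
    apply Rnot_le_lt in Hgt.
    set (x := lam m / 2).
    assert (Hx : 0 < x) by (unfold x; lra).
    set (eps := sqrt x).
    assert (He : 0 < eps) by (apply sqrt_lt_R0; auto).
    assert (He1 : eps <= 1).
    { unfold eps. rewrite <- sqrt_1. apply sqrt_le_1_alt. unfold x; lra. }
    assert (He2 : eps ^ 2 = x) by (apply pow2_sqrt; lra).
    assert (Hcount : INR m <= C * Rpower eps (- p)).
    { set (l := map (fun j => [j]) (seq 1 m)).
      assert (Hlen : length l = m) by (unfold l; rewrite length_map, length_seq; auto).
      rewrite <- Hlen. apply Hn; [lra|..].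
      - unfold l. apply NoDup_map_NoDup_ForallPairs; [|apply seq_NoDup].
        intros a b _ _ H; injection H; auto.
      - intros k Hk. unfold l in Hk. apply in_map_iff in Hk.
        destruct Hk as [j [<- Hj]]. apply in_seq in Hj.
        split.
        + split; [reflexivity|]. split.
          * intros z [<-|[]]; lia.
          * intros; lia.
        + unfold lam_prod; cbn [fold_right]. rewrite Rmult_1_r, He2.
          pose proof (lam_mono lam (conj Hnn (conj Hdec Hlim)) j m ltac:(lia) ltac:(lia)).
          unfold x; lra. }
    assert (Epow : Rpower eps (- p) = / Rpower x (p / 2)).
    { rewrite Rpower_Ropp. f_equal. unfold eps. rewrite <- Rpower_sqrt by auto.
      rewrite Rpower_mult. f_equal. field. }
    rewrite Epow in Hcount.
    set (y := Rpower x (p/2)) in *.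
    assert (Hy : 0 < y) by (unfold y, Rpower; apply exp_pos).
    assert (Hy2 : y * INR m <= C).
    { apply (Rmult_le_compat_l y) in Hcount; [|lra].
      rewrite <- Rmult_assoc, (Rmult_comm y C), Rmult_assoc, Rinv_r in Hcount by lra. lra. }
    assert (Ex : Rpower (lam m) p = Rpower 2 p * y ^ 2).
    { replace (lam m) with (2 * x) by (unfold x; field).
      rewrite <- Rpower_mult_distr by lra. f_equal. unfold y.
      rewrite <- Rpower_pow by (unfold Rpower; apply exp_pos).
      rewrite Rpower_mult. f_equal. simpl. field. }
    rewrite Ex. unfold K.
    assert (Hyy : y ^ 2 <= C ^ 2 * / INR m ^ 2).
    { assert (y <= C * / INR m).
      { apply (Rmult_le_reg_r (INR m)); auto. rewrite Rmult_assoc, Rinv_l by lra. lra. }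
      assert (0 <= y) by lra.
      replace (C ^ 2 * / INR m ^ 2) with ((C * / INR m) ^ 2) by (field; lra).
      apply pow_incr; lra. }
    assert (0 < Rpower 2 p) by (unfold Rpower; apply exp_pos).
    rewrite Rmult_assoc. apply Rmult_le_compat_l; lra. }
  destruct (finite_max (fun m => rpow_nn (lam m) p * (INR m)^2) M1) as [D0 HD0].
  set (D := Rmax K D0).
  apply (ell_of_bound _ D).
  - intros; apply rpow_nn_nonneg.
  - intros j. destruct (Compare_dec.le_lt_dec M1 (S j)) as [Hle|Hlt].
    + eapply Rle_trans; [apply Key; auto|]. apply Rmult_le_compat_r.
      * left; apply Rinv_0_lt_compat, pow_lt, lt_0_INR; lia.
      * apply Rmax_l.
    + specialize (HD0 (S j) Hlt). simpl in HD0.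
      assert (HS : 0 < INR (S j)) by (apply lt_0_INR; lia).
      apply (Rmult_le_reg_r (INR (S j) ^ 2)); [apply pow_lt; auto|].
      rewrite Rmult_assoc, Rinv_l by (apply pow_nonzero; lra).
      rewrite Rmult_1_r. eapply Rle_trans; [|apply Rmax_r].
      simpl; lra.
Qed.


Lemma exp_le x y : x <= y -> exp x <= exp y.
Proof. intros [H|H]; [left; apply exp_increasing; auto|subst; lra]. Qed.

Lemma ln_le0 x : 0 < x -> x <= 1 -> ln x <= 0.
Proof. intros H [H1|H1]; [left; rewrite <- ln_1; apply ln_increasing; auto|subst; rewrite ln_1; lra]. Qed.

Lemma sumL_seq_sum (g : nat -> R) n : sumL g (seq 1 (S n)) = sum_f_R0 (fun j => g (S j)) n.
Proof.
  induction n as [|n IH].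
  - simpl. lra.
  - rewrite seq_S, sumL_app, IH, tech5. simpl. replace (S (S n)) with (S (S n)) by lia. lra.
Qed.

Lemma sumL_prefix (f : nat -> R) a b : (forall x, 0 <= f x) -> (a <= b)%nat ->
  sumL f (seq 1 a) <= sumL f (seq 1 b).
Proof.
  intros Hf Hab. replace b with (a + (b - a))%nat by lia.
  rewrite seq_app, sumL_app. pose proof (sumL_nonneg f (seq (1 + a) (b - a)) Hf). lra.
Qed.

Lemma sumL_split (f g : nat -> R) M : (forall x, 0 <= f x) -> (forall x, 0 <= g x) ->
  (forall m, (M <= m)%nat -> f m <= g m) ->
  forall B, sumL f (seq 1 B) <= sumL f (seq 1 M) + sumL g (seq 1 B).
Proof.
  intros Hf Hg Hfg B. induction B as [|B IH].
  - simpl. pose proof (sumL_nonneg f (seq 1 M) Hf). lra.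
  - destruct (Compare_dec.le_lt_dec M (S B)) as [Hle|Hlt].
    + rewrite seq_S, !sumL_app. simpl. specialize (Hfg (S B) Hle).
      replace (1 + B)%nat with (S B) by lia. lra.
    + pose proof (sumL_prefix f (S B) M Hf ltac:(lia)).
      pose proof (sumL_nonneg g (seq 1 (S B)) Hg). lra.
Qed.

Lemma lam_prod_pow lam n k : (forall m, In m k -> (1 <= m)%nat) ->
  lam_prod (fun m => match m with O => 0 | _ => lam m ^ n end) k = (lam_prod lam k) ^ n.
Proof.
  induction k as [|a k IH]; intros Hk; unfold lam_prod in *; simpl fold_right.
  - rewrite pow1; auto.
  - rewrite IH, Rpow_mult_distr by (intros; apply Hk; simpl; auto).
    destruct a; [specialize (Hk O (or_introl eq_refl)); lia|auto].
Qed.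

Lemma length_sum_le {A} (f : A -> R) c l : (forall x, In x l -> c <= f x) ->
  INR (length l) * c <= sumL f l.
Proof.
  induction l as [|a l IH]; intros H; cbn [length sumL fold_right].
  - simpl; lra.
  - rewrite S_INR. unfold sumL; cbn [fold_right]; fold (sumL f l). assert (c <= f a) by (apply H; simpl; auto).
    assert (INR (length l) * c <= sumL f l) by (apply IH; intros; apply H; simpl; auto). lra.
Qed.

Lemma Rpower_pos x y : 0 < Rpower x y.
Proof. unfold Rpower; apply exp_pos. Qed.

Lemma ell_spt (lam : nat -> R) (I : nat -> nat -> bool) :
  eigen_seq lam -> (exists tau, 0 < tau /\ in_ell lam tau) ->
  (exists rho d1, 0 < rho < 1 /\ forall d k, (d1 <= d)%nat -> nablaA I d k -> lam_prod lam k <= rho ^ d) ->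
  strongly_poly_tractable lam I.
Proof.
  intros Hl [tau [Htau [s Hs]]] [rho [d1 [Hrho Hdec]]].
  destruct Hl as [Hnn [Hmon Hlim]].
  set (t := fun j => rpow_nn (lam (S j)) tau) in *.
  assert (Hts : forall n, sum_f_R0 t n <= s).
  { apply growing_ineq; [|exact Hs]. intros n. rewrite tech5.
    pose proof (rpow_nn_nonneg (lam (S (S n))) tau). unfold t at 3. lra. }
  destruct (INR_unbounded tau) as [n1 Hn1].
  set (n0 := S n1).
  assert (Hn0 : tau <= INR n0) by (unfold n0; rewrite S_INR; lra).
  destruct (Hlim 1 ltac:(lra)) as [M1 HM1].
  set (M2 := Nat.max M1 1).
  set (mu := fun m => match m with O => 0 | _ => lam m ^ n0 end).
  set (g := fun m => rpow_nn (lam m) tau).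
  assert (Hmu : forall m, 0 <= mu m).
  { intros m. unfold mu. destruct m as [|m]; [lra|]. apply pow_le, Hnn; lia. }
  assert (Hmug : forall m, (M2 <= m)%nat -> mu m <= g m).
  { intros m Hm. unfold mu, g. destruct m as [|m]; [lia|].
    assert (H1 : lam (S m) < 1) by (apply HM1; lia).
    assert (H0 : 0 <= lam (S m)) by (apply Hnn; lia).
    unfold rpow_nn. destruct (Rle_dec (lam (S m)) 0) as [Hle|Hgt].
    - replace (lam (S m)) with 0 by lra. unfold n0. simpl. lra.
    - apply Rnot_le_lt in Hgt. rewrite <- Rpower_pow by auto.
      unfold Rpower. apply exp_le.
      pose proof (ln_le0 (lam (S m)) Hgt ltac:(lra)). nra. }
  set (S0 := sumL mu (seq 1 M2) + s).
  assert (Hg0 : forall B, sumL g (seq 1 B) <= s).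
  { intros [|B].
    - simpl. specialize (Hts O). simpl in Hts. pose proof (rpow_nn_nonneg (lam 1%nat) tau).
      unfold t in Hts. lra.
    - rewrite sumL_seq_sum. apply Hts. }
  set (SS := S0 + 1).
  assert (HS : forall B, sumL mu (seq 1 B) <= SS).
  { intros B. pose proof (sumL_split mu g M2 Hmu ltac:(intros; apply rpow_nn_nonneg) Hmug B).
    specialize (Hg0 B). unfold SS, S0. lra. }
  assert (HS1 : 1 <= SS).
  { unfold SS, S0. pose proof (sumL_nonneg mu (seq 1 M2) Hmu).
    specialize (Hts O). pose proof (rpow_nn_nonneg (lam 1%nat) tau). unfold t in Hts. simpl in Hts. lra. }
  set (q := 2 * ln SS / (- ln rho)).
  assert (Hlnrho : ln rho < 0) by (rewrite <- ln_1; apply ln_increasing; lra).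
  assert (HlnS : 0 <= ln SS) by (destruct HS1 as [HS1|HS1]; [left; rewrite <- ln_1; apply ln_increasing; lra| rewrite <- HS1, ln_1; lra]).
  assert (Hq : 0 <= q) by (unfold q; apply Rmult_le_pos; [lra|left; apply Rinv_0_lt_compat; lra]).
  exists (SS ^ d1), (2 * INR n0 + q). split; [apply pow_lt; lra|]. split.
  { assert (0 < INR n0) by (apply lt_0_INR; unfold n0; lia). lra. }
  intros d eps Hd Heps l Hnd Hl.
  assert (HSd : INR (length l) * (eps ^ 2) ^ n0 <= SS ^ d).
  { eapply Rle_trans; [|apply (count_bound mu SS d l Hmu HS Hnd)].
    - apply length_sum_le. intros k Hk. destruct (Hl k Hk) as [[Hlen [Hk1 _]] Hgt].
      unfold mu; rewrite lam_prod_pow by auto. apply pow_incr. split; [apply pow_le; lra|lra].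
    - intros k Hk. destruct (Hl k Hk) as [[Hlen [Hk1 _]] _]. auto. }
  assert (Hlneps : ln eps <= 0) by (apply ln_le0; lra).
  assert (HRq : 1 <= Rpower eps (- q)).
  { unfold Rpower. rewrite <- exp_0. apply exp_le. nra. }
  destruct l as [|k0 l'].
  { simpl. apply Rmult_le_pos; [apply pow_le; lra|left; apply Rpower_pos]. }
  assert (HSd2 : SS ^ d <= SS ^ d1 * Rpower eps (- q)).
  { destruct (Compare_dec.le_lt_dec d1 d) as [Hle|Hlt].
    - destruct (Hl k0 (or_introl eq_refl)) as [Hk0 Hgt].
      pose proof (Hdec d k0 Hle Hk0) as Hr.
      assert (Hlt : eps ^ 2 < rho ^ d) by lra.
      apply ln_increasing in Hlt; [|apply pow_lt; lra].
      rewrite !ln_pow in Hlt by lra.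
      assert (Hd' : INR d <= 2 * ln eps / ln rho).
      { assert (E : 2 * ln eps / ln rho * (- ln rho) = - (2 * ln eps)) by (field; lra).
        simpl in Hlt. nra. }
      assert (Hx : SS ^ d <= Rpower eps (- q)).
      { rewrite <- Rpower_pow by lra. unfold Rpower. apply exp_le.
        unfold q. replace (- (2 * ln SS / - ln rho) * ln eps) with ((2 * ln eps / ln rho) * ln SS) by (field; lra).
        apply Rmult_le_compat_r; lra. }
      assert (1 <= SS ^ d1) by (rewrite <- (pow1 d1); apply pow_incr; lra).
      nra.
    - assert (SS ^ d <= SS ^ d1) by (apply Rle_pow; lia || lra).
      assert (0 <= SS ^ d) by (apply pow_le; lra). nra. }
  assert (Hep : 0 < (eps ^ 2) ^ n0) by (apply pow_lt, pow_lt; lra).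
  assert (E1 : Rpower eps (- (2 * INR n0 + q)) = / (eps ^ 2) ^ n0 * Rpower eps (- q)).
  { rewrite Ropp_plus_distr, Rpower_plus. f_equal.
    rewrite Rpower_Ropp, <- pow_mult. f_equal. rewrite <- Rpower_pow by lra.
    f_equal. rewrite mult_INR. simpl. lra. }
  rewrite E1.
  apply (Rmult_le_reg_r ((eps ^ 2) ^ n0)); auto.
  replace (SS ^ d1 * (/ (eps ^ 2) ^ n0 * Rpower eps (- q)) * (eps ^ 2) ^ n0)
    with (SS ^ d1 * Rpower eps (- q)) by (field; lra).
  lra.
Qed.


Lemma lam_le1 lam : eigen_seq lam -> forall m, (1 <= m)%nat -> 0 <= lam m <= lam 1%nat.
Proof.
  intros Hl m Hm. split; [apply (proj1 Hl); auto|]. apply (lam_mono lam Hl); lia.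
Qed.

Lemma prod_bounds lam L k : (forall m, In m k -> 0 <= lam m <= L) ->
  0 <= lam_prod lam k <= L ^ length k.
Proof.
  induction k as [|a k IH]; intros Hk; unfold lam_prod in *; simpl.
  - lra.
  - assert (Ha := Hk a (or_introl eq_refl)).
    assert (IH' := IH (fun m Hm => Hk m (or_intror Hm))).
    split; [apply Rmult_le_pos; lra|]. apply Rmult_le_compat; lra.
Qed.

Lemma decay_small lam I : eigen_seq lam -> 0 < lam 2%nat -> lam 1%nat < 1 ->
  exists rho d1, 0 < rho < 1 /\ forall d k, (d1 <= d)%nat -> nablaA I d k -> lam_prod lam k <= rho ^ d.
Proof.
  intros Hl H2 H1. exists (lam 1%nat), O.
  assert (lam 2%nat <= lam 1%nat) by (apply (proj1 (proj2 Hl)); lia).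
  split; [lra|]. intros d k _ [Hlen [Hk _]]. subst d.
  apply prod_bounds. intros m Hm. apply lam_le1; auto.
Qed.

Lemma fold_map_S (f : nat -> R) l :
  fold_right (fun u acc => f u * acc) 1 (map S l) = fold_right (fun u acc => f (S u) * acc) 1 l.
Proof. induction l; simpl; [auto|]. rewrite IHl; auto. Qed.

Lemma lam_prod_pos lam k :
  lam_prod lam k = fold_right (fun u acc => lam (nth u k O) * acc) 1 (seq 0 (length k)).
Proof.
  induction k as [|a k IH]; [reflexivity|].
  unfold lam_prod in *. simpl. rewrite <- seq_shift, fold_map_S. rewrite IH. reflexivity.
Qed.

Lemma prod_theta (f : nat -> R) (P : nat -> bool) L th s :
  0 <= L -> 0 <= th <= 1 ->
  (forall u, In u s -> 0 <= f u <= L) -> (forall u, In u s -> P u = true -> f u <= L * th) ->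
  0 <= fold_right (fun u acc => f u * acc) 1 s /\
  fold_right (fun u acc => f u * acc) 1 s <= L ^ length s * th ^ length (filter P s).
Proof.
  intros HL Hth; induction s as [|a s IH]; intros H1 H2; simpl.
  - lra.
  - destruct IH as [IH1 IH2]; [intros; apply H1; simpl; auto|intros; apply H2; simpl; auto|].
    assert (Ha := H1 a (or_introl eq_refl)).
    assert (0 <= L ^ length s) by (apply pow_le; auto).
    assert (0 <= th ^ length (filter P s)) by (apply pow_le; lra).
    split; [apply Rmult_le_pos; lra|].
    destruct (P a) eqn:EP; simpl.
    + assert (f a <= L * th) by (apply H2; simpl; auto).
      replace (L * L ^ length s * (th * th ^ length (filter P s)))
        with ((L * th) * (L ^ length s * th ^ length (filter P s))) by ring.
      apply Rmult_le_compat; lra.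
    + rewrite Rmult_assoc. apply Rmult_le_compat; lra.
Qed.

Lemma len_filter_map (p : nat -> bool) l :
  length (filter p (map S l)) = length (filter (fun u => p (S u)) l).
Proof. induction l; simpl; auto. destruct (p (S a)); simpl; auto. Qed.

Lemma len_filter_filter (P Q : nat -> bool) l :
  (length (filter P (filter Q l)) <= length (filter P l))%nat.
Proof. induction l; simpl; auto. destruct (Q a); simpl; destruct (P a); simpl; lia. Qed.

Lemma count_big I d k M : nablaA I d k ->
  (card_I I d - M <= length (filter (fun u => M <=? nth u k O) (seq 0 d)))%nat.
Proof.
  intros [Hlen [Hk Hinc]].
  set (s := filter (fun u => I d (S u)) (seq 0 d)).
  set (P := fun u => M <=? nth u k O).
  assert (Hs : card_I I d = length s).
  { unfold card_I, s. rewrite <- seq_shift, len_filter_map. reflexivity. }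
  pose proof (len_filter_filter P (fun u => I d (S u)) (seq 0 d)) as H1. fold s in H1.
  pose proof (filter_length P s) as H2.
  assert (H3 : (length (filter (fun x => negb (P x)) s) <= M)%nat).
  { set (g := fun u => nth u k O).
    rewrite <- (length_map g), <- (length_seq M 0).
    apply NoDup_incl_length.
    - apply NoDup_map_NoDup_ForallPairs.
      + intros u v Hu Hv Hg.
        apply filter_In in Hu as [Hu _]. apply filter_In in Hv as [Hv _].
        unfold s in Hu, Hv. apply filter_In in Hu as [Hu Iu]. apply filter_In in Hv as [Hv Iv].
        apply in_seq in Hu. apply in_seq in Hv.
        destruct (Nat.lt_trichotomy u v) as [Huv|[Huv|Huv]]; auto.
        * specialize (Hinc (S u) (S v) ltac:(lia) ltac:(lia) ltac:(lia) Iu Iv).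
          simpl in Hinc. rewrite !Nat.sub_0_r in Hinc. unfold g in Hg. lia.
        * specialize (Hinc (S v) (S u) ltac:(lia) ltac:(lia) ltac:(lia) Iv Iu).
          simpl in Hinc. rewrite !Nat.sub_0_r in Hinc. unfold g in Hg. lia.
      + apply NoDup_filter. unfold s. apply NoDup_filter, seq_NoDup.
    - intros x Hx. apply in_map_iff in Hx as [u [<- Hu]].
      apply filter_In in Hu as [_ Hu]. unfold P in Hu. apply Bool.negb_true_iff, Nat.leb_gt in Hu.
      apply in_seq. unfold g. lia. }
  fold P. lia.
Qed.

Lemma pow_anti x m n : 0 <= x <= 1 -> (m <= n)%nat -> x ^ n <= x ^ m.
Proof.
  intros Hx Hmn. replace n with (m + (n - m))%nat by lia. rewrite pow_add.
  assert (0 <= x ^ m) by (apply pow_le; lra).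
  assert (x ^ (n - m) <= 1) by (rewrite <- (pow1 (n - m)); apply pow_incr; lra).
  assert (0 <= x ^ (n - m)) by (apply pow_le; lra). nra.
Qed.

Lemma decay_lin lam I : eigen_seq lam -> 1 <= lam 1%nat ->
  (exists c d0, 0 < c /\ forall d, (d0 <= d)%nat -> c * INR d <= INR (card_I I d)) ->
  exists rho d1, 0 < rho < 1 /\ forall d k, (d1 <= d)%nat -> nablaA I d k -> lam_prod lam k <= rho ^ d.
Proof.
  intros Hl HL [c [d0 [Hc Hcd]]].
  set (L := lam 1%nat) in *.
  destruct (INR_unbounded (/ c)) as [N HN].
  assert (HNc : 1 < INR N * c).
  { apply (Rmult_lt_compat_r c) in HN; auto. rewrite Rinv_l in HN by lra. lra. }
  set (b := / (4 * L)).
  assert (Hb : 0 < b <= 1) by (unfold b; split; [apply Rinv_0_lt_compat; lra|];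
    rewrite <- Rinv_1; apply Rinv_le_contravar; lra).
  assert (HLb : L * b = / 4) by (unfold b; field; lra).
  set (th := b ^ N).
  assert (Hth : 0 < th <= 1) by (unfold th; split; [apply pow_lt; lra|rewrite <- (pow1 N); apply pow_incr; lra]).
  destruct (proj2 (proj2 Hl) (L * th) ltac:(nra)) as [M HM].
  set (M' := Nat.max M 1).
  assert (HthM : 0 < th ^ M') by (apply pow_lt; lra).
  destruct (pow_lt_1_zero (/ 2) ltac:(rewrite Rabs_pos_eq; lra) (th ^ M') HthM) as [d2 Hd2].
  exists (/ 2), (Nat.max d0 d2). split; [lra|].
  intros d k Hd Hk.
  set (a := card_I I d).
  assert (Hda : (d <= N * a)%nat).
  { apply INR_le. rewrite mult_INR. specialize (Hcd d ltac:(lia)). fold a in Hcd.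
    pose proof (pos_INR d). pose proof (pos_INR N). nra. }
  pose proof (count_big I d k M' Hk) as Hr. fold a in Hr.
  set (r := length (filter (fun u => M' <=? nth u k O) (seq 0 d))) in *.
  destruct Hk as [Hlen [Hk1 Hinc]].
  assert (Hprod : lam_prod lam k <= L ^ d * th ^ r).
  { rewrite lam_prod_pos, Hlen.
    pose proof (prod_theta (fun u => lam (nth u k O)) (fun u => M' <=? nth u k O) L th (seq 0 d)
      ltac:(lra) ltac:(lra)) as HP.
    rewrite length_seq in HP. apply HP.
    - intros u Hu. apply in_seq in Hu. apply lam_le1; auto. apply Hk1, nth_In; lia.
    - intros u Hu Hle. apply Nat.leb_le in Hle. left; apply HM; lia. }
  assert (H1 : th ^ r <= th ^ (a - M')) by (apply pow_anti; [lra|lia]).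
  assert (H2 : th ^ (a - M') * th ^ M' <= b ^ d).
  { rewrite <- pow_add. eapply Rle_trans; [apply pow_anti; [lra|]|].
    - instantiate (1 := a). lia.
    - unfold th. rewrite <- pow_mult. apply pow_anti; [lra|lia]. }
  assert (H3 : L ^ d * b ^ d = (/ 2) ^ d * (/ 2) ^ d).
  { rewrite <- Rpow_mult_distr, HLb, <- Rpow_mult_distr. f_equal. field. }
  specialize (Hd2 d ltac:(lia)). rewrite Rabs_pos_eq in Hd2 by (apply pow_le; lra).
  assert (HLd : 0 <= L ^ d) by (apply pow_le; lra).
  assert (Hh : 0 < (/ 2) ^ d) by (apply pow_lt; lra).
  set (X := th ^ (a - M')) in *.
  assert (0 <= X) by (unfold X; apply pow_le; lra).
  assert (L ^ d * X * th ^ M' <= (/ 2) ^ d * th ^ M').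
  { assert (L ^ d * X * th ^ M' <= L ^ d * b ^ d) by (rewrite Rmult_assoc; apply Rmult_le_compat_l; lra).
    nra. }
  assert (L ^ d * X <= (/ 2) ^ d) by (apply (Rmult_le_reg_r (th ^ M')); lra).
  assert (L ^ d * th ^ r <= L ^ d * X) by (apply Rmult_le_compat_l; lra).
  lra.
Qed.


Lemma spt_pt lam I : strongly_poly_tractable lam I -> poly_tractable lam I.
Proof.
  intros [C [p [HC [Hp H]]]]. exists C, p, 0. split; [auto|]. split; [auto|]. split; [lra|].
  intros d eps Hd Heps. rewrite Rpower_O by (apply lt_0_INR; lia). rewrite Rmult_1_r. auto.
Qed.

Lemma pt_ell' lam I : eigen_seq lam -> poly_tractable lam I -> exists tau, 0 < tau /\ in_ell lam tau.
Proof.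
  intros Hl [C [p [q [HC [Hp [Hq H]]]]]]. apply (pt_ell lam I C p Hl HC Hp).
  intros eps Heps. specialize (H 1%nat eps ltac:(lia) Heps).
  replace (Rpower (INR 1) q) with 1 in H; [rewrite Rmult_1_r in H; auto|].
  simpl. unfold Rpower. rewrite ln_1, Rmult_0_r, exp_0. reflexivity.
Qed.

Theorem theorem4 (lam : nat -> R) (I : nat -> nat -> bool)
  (Hlam : eigen_seq lam) (HI : index_family I)
  (Hlam2 : 0 < lam 2%nat) (Hinit : init_error_pos lam I) :
  (lam 1%nat < 1 ->
     (strongly_poly_tractable lam I <-> poly_tractable lam I) /\
     (poly_tractable lam I <-> exists tau, 0 < tau /\ in_ell lam tau)) /\
  (1 <= lam 1%nat ->
   (exists c d0, 0 < c /\ forall d, (d0 <= d)%nat -> c * INR d <= INR (card_I I d)) ->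
     (strongly_poly_tractable lam I <-> poly_tractable lam I) /\
     (poly_tractable lam I <-> exists tau, 0 < tau /\ in_ell lam tau)).
Proof.
  split.
  - intros H1. pose proof (decay_small lam I Hlam Hlam2 H1) as Hd.
    split; split.
    + apply spt_pt.
    + intros Hp. apply ell_spt; auto. apply (pt_ell' lam I Hlam Hp).
    + apply pt_ell'; auto.
    + intros He. apply spt_pt, ell_spt; auto.
  - intros H1 Hc. pose proof (decay_lin lam I Hlam H1 Hc) as Hd.
    split; split.
    + apply spt_pt.
    + intros Hp. apply ell_spt; auto. apply (pt_ell' lam I Hlam Hp).
    + apply pt_ell'; auto.
    + intros He. apply spt_pt, ell_spt; auto.
Qed.
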